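(* Consider the distributed detection model in the context, where the fusion center knows $(\alpha,P_{1,0},P_{0,1})$ and uses the optimal (MAP) fusion rule, and let $P_E^*(P_{1,0},P_{0,1})$ denote its resulting error probability. Then the attacking strategies $(P_{1,0}^*,P_{0,1}^* )\in[0,1]^2$ maximizing $P_E^*$ are as follows: if $\alpha>0.5$, any pair $(p_{1,0},p_{0,1})\in[0,1]^2$ satisfying $\alpha(p_{1,0}+p_{0,1})=1$ is optimal; if $\alpha\le 0.5$, $(P_{1,0}^*,P_{0,1}^* )=(1,1)$ is optimal.
   Context: Binary hypothesis test between $H_0$ and $H_1$ with priors $P_0,P_1\in(0,1)$, $P_0+P_1=1$. There are $N$ sensors, each using the same fixed local threshold, so that conditionally on the hypothesis their local decisions $v_i\in\{0,1\}$ are i.i.d. with $P(v_i=1\mid H_1)=P_d$, $P(v_i=1\mid H_0)=P_f$, where $0<P_f<P_d<1$. Each sensor independently is Byzantine with probability $\alpha\in[0,1]$. Honest nodes send $u_i=v_i$; a Byzantine node sends $u_i=1$ with probability $P_{1,0}$ when $v_i=0$ and sends $u_i=0$ with probability $P_{0,1}$ when $v_i=1$. Hence conditionally on $H_j$ the $u_i$ are i.i.d. with $P(u_i=1\mid H_0)=\pi_{1,0}=\alpha(P_{1,0}(1-P_f)+(1-P_{0,1})P_f)+(1-\alpha)P_f$ and $P(u_i=1\mid H_1)=\pi_{1,1}=\alpha(P_{1,0}(1-P_d)+(1-P_{0,1})P_d)+(1-\alpha)P_d$. The MAP fusion rule decides $H_1$ when $P(\mathbf u\mid H_1)/P(\mathbf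 u\mid H_0)>P_0/P_1$ and $H_0$ otherwise; it minimizes the error probability $P(\text{decide }H_1, H_0)+P(\text{decide }H_0,H_1)$ among all fusion rules based on $\mathbf u=(u_1,\dots,u_N)$, and this minimum is $P_E^*$. Equivalently, when $\pi_{1,1}>\pi_{1,0}$ it is the $K$-out-of-$N$ rule deciding $H_1$ iff the number of ones is at least $\left\lceil \ln\left[\frac{P_0}{P_1}\left(\frac{1-\pi_{1,0}}{1-\pi_{1,1}}\right)^{N}\right]\Big/\ln\left[\frac{\pi_{1,1}(1-\pi_{1,0})}{\pi_{1,0}(1-\pi_{1,1})}\right]\right\rceil$. *)

(* Defs.v *)
From HB Require Import structures.
From mathcomp Require Import all_boot all_order all_algebra.
Set Implicit Arguments. Unset Strict Implicit. Unset Printing Implicit Defensive.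
Import Order.TTheory GRing.Theory Num.Theory.
Local Open Scope ring_scope.

Section Defs.
Variable R : realFieldType.

(* P(u_i = 1 | H0) *)
Definition pi10 (alpha Pf p10 p01 : R) : R :=
  alpha * (p10 * (1 - Pf) + (1 - p01) * Pf) + (1 - alpha) * Pf.
(* P(u_i = 1 | H1) *)
Definition pi11 (alpha Pd p10 p01 : R) : R :=
  alpha * (p10 * (1 - Pd) + (1 - p01) * Pd) + (1 - alpha) * Pd.

Definition lik (N : nat) (p : R) (u : {ffun 'I_N -> bool}) : R :=
  \prod_(i < N) (if u i then p else 1 - p).

(* Error probability P(decide H1, H0) + P(decide H0, H1) of the MAP fusion
   rule, which decides H1 iff P(u|H1)/P(u|H0) > P0/P1, written in the
   cross-multiplied form P1 P(u|H1) > P0 P(u|H0). *)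
Definition map_error (N : nat) (P0 alpha Pd Pf p10 p01 : R) : R :=
  let P1 := 1 - P0 in
  \sum_(u : {ffun 'I_N -> bool})
    (if P1 * lik (pi11 alpha Pd p10 p01) u > P0 * lik (pi10 alpha Pf p10 p01) u
     then P0 * lik (pi10 alpha Pf p10 p01) u
     else P1 * lik (pi11 alpha Pd p10 p01) u).

Definition in01 (x : R) : Prop := 0 <= x <= 1.

Definition optimal_attack (N : nat) (P0 alpha Pd Pf p10 p01 : R) : Prop :=
  in01 p10 /\ in01 p01 /\
  forall q10 q01 : R, in01 q10 -> in01 q01 ->
    map_error N P0 alpha Pd Pf q10 q01 <= map_error N P0 alpha Pd Pf p10 p01.

End Defs.

(* Main.v *)
Require Import Defs.
From HB Require Import structures.
From mathcomp Require Import all_boot all_order all_algebra.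
From mathcomp Require Import ring lra.
Import Order.TTheory GRing.Theory Num.Theory.
Local Open Scope ring_scope.

Section Aux.
Variable R : realFieldType.
Variable N : nat.

Definition mn (a b : R) := if b > a then a else b.

Lemma mn_le1 a b : mn a b <= a.
Proof. rewrite /mn; case: ifP => [_|/negbT]; rewrite ?lexx // -leNgt. by []. Qed.
Lemma mn_le2 a b : mn a b <= b.
Proof. rewrite /mn; case: ifP => [/ltW|_]; rewrite ?lexx //. Qed.
Lemma mn_ge a b c : c <= a -> c <= b -> c <= mn a b.
Proof. by rewrite /mn; case: ifP. Qed.

Definition Err (P0 pA pB : R) : R :=
  \sum_(u : {ffun 'I_N -> bool})
    mn (P0 * lik pA u) ((1 - P0) * lik pB u).

Lemma map_errorE P0 alpha Pd Pf p10 p01 :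
  map_error N P0 alpha Pd Pf p10 p01 =
  Err P0 (pi10 alpha Pf p10 p01) (pi11 alpha Pd p10 p01).
Proof. by []. Qed.

Lemma sum_prod (F : 'I_N -> bool -> R) :
  \sum_(u : {ffun 'I_N -> bool}) \prod_(i < N) F i (u i) =
  \prod_(i < N) (F i true + F i false).
Proof.
rewrite -bigA_distr_bigA; apply: eq_bigr => i _; by rewrite big_bool.
Qed.

Lemma sum_lik (p : R) : \sum_(u : {ffun 'I_N -> bool}) lik p u = 1.
Proof.
rewrite /lik (sum_prod (fun i (b : bool) => if b then p else 1 - p)); rewrite big1 // => i _; by rewrite /= addrC subrK.
Qed.

Lemma lik_ge0 (p : R) (u : {ffun 'I_N -> bool}) : 0 <= p <= 1 -> 0 <= lik p u.
Proof.
move=> /andP[h0 h1]; apply: prodr_ge0 => i _; case: (u i) => //.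
by rewrite subr_ge0.
Qed.

Lemma Err_le (P0 pA pB : R) : Err P0 pA pB <= P0 /\ Err P0 pA pB <= 1 - P0.
Proof.
split.
- rewrite -[X in _ <= X]mulr1 -(sum_lik pA) mulr_sumr.
  by apply: ler_sum => u _; apply: mn_le1.
- have -> : 1 - P0 = (1 - P0) * \sum_(u : {ffun 'I_N -> bool}) lik pB u.
    by rewrite sum_lik mulr1.
  rewrite mulr_sumr.
  by apply: ler_sum => u _; apply: mn_le2.
Qed.

Lemma Err_eq (P0 p : R) : 0 <= p <= 1 ->
  Err P0 p p = P0 \/ Err P0 p p = 1 - P0.
Proof.
move=> hp.
have [h|h] := lerP P0 (1 - P0).
- left; rewrite -[RHS]mulr1 -(sum_lik p) mulr_sumr; apply: eq_bigr => u _.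
  have := @lik_ge0 _ u hp; rewrite /mn; case: ifP => // /negbT; rewrite -leNgt => h2 h3.
  apply/eqP; rewrite eq_le h2 /=; exact: ler_wpM2r.
- right; have -> : 1 - P0 = (1 - P0) * \sum_(u : {ffun 'I_N -> bool}) lik p u.
    by rewrite sum_lik mulr1.
  rewrite mulr_sumr; apply: eq_bigr => u _.
  have := @lik_ge0 _ u hp; rewrite /mn; case: ifP => // h2 h3.
  apply/eqP; rewrite eq_le (ltW h2) /=; apply: ler_wpM2r => //; exact: ltW.
Qed.

Definition kk (m0 m1 : R) (b c : bool) : R :=
  if c then (if b then m1 else m0) else (if b then 1 - m1 else 1 - m0).

Definition gg (m0 m1 a : R) := (1 - a) * m0 + a * m1.

Lemma lik_garble m0 m1 a (v : {ffun 'I_N -> bool}) :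
  lik (gg m0 m1 a) v =
  \sum_(u : {ffun 'I_N -> bool}) (\prod_(i < N) kk m0 m1 (u i) (v i)) * lik a u.
Proof.
rewrite /lik.
rewrite [in RHS](eq_bigr (fun u : {ffun 'I_N -> bool} => \prod_(i < N) (kk m0 m1 (u i) (v i) * (if u i then a else 1 - a)))); last first.
  by move=> u _; rewrite big_split.
rewrite (sum_prod (fun i b => kk m0 m1 b (v i) * (if b then a else 1 - a))).
apply: eq_bigr => i _; rewrite /kk /gg; case: (v i) => /=; ring.
Qed.

Lemma sum_kk m0 m1 (u : {ffun 'I_N -> bool}) :
  \sum_(v : {ffun 'I_N -> bool}) \prod_(i < N) kk m0 m1 (u i) (v i) = 1.
Proof.
rewrite (sum_prod (fun i c => kk m0 m1 (u i) c)) big1 // => i _.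
rewrite /kk; case: (u i); ring.
Qed.

Lemma kk_ge0 m0 m1 b c : 0 <= m0 <= 1 -> 0 <= m1 <= 1 -> 0 <= kk m0 m1 b c.
Proof.
move=> /andP[? ?] /andP[? ?]; rewrite /kk; case: b; case: c => //;
  by rewrite subr_ge0.
Qed.

Lemma Err_garble (P0 m0 m1 a0 a1 : R) : 0 <= m0 <= 1 -> 0 <= m1 <= 1 ->
  Err P0 a0 a1 <= Err P0 (gg m0 m1 a0) (gg m0 m1 a1).
Proof.
move=> h0 h1.
pose K u v := \prod_(i < N) kk m0 m1 (u i) (v i).
have K0 u v : 0 <= K u v by apply: prodr_ge0 => i _; exact: kk_ge0.
rewrite /Err.
have -> : \sum_(u : {ffun 'I_N -> bool}) mn (P0 * lik a0 u) ((1 - P0) * lik a1 u)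
  = \sum_(v : {ffun 'I_N -> bool}) \sum_(u : {ffun 'I_N -> bool})
      K u v * mn (P0 * lik a0 u) ((1 - P0) * lik a1 u).
  rewrite exchange_big /=; apply: eq_bigr => u _.
  by rewrite -mulr_suml sum_kk mul1r.
apply: ler_sum => v _; apply: mn_ge.
- rewrite lik_garble mulr_sumr; apply: ler_sum => u _.
  rewrite mulrCA; apply: ler_wpM2l => //; exact: mn_le1.
- rewrite lik_garble mulr_sumr; apply: ler_sum => u _.
  rewrite mulrCA; apply: ler_wpM2l => //; exact: mn_le2.
Qed.

End Aux.

Lemma blind_opt (R : realFieldType) (N : nat) (P0 alpha Pd Pf : R) p10 p01 :
  0 <= alpha <= 1 -> 0 < Pf -> Pf < Pd -> Pd < 1 ->
  in01 p10 -> in01 p01 -> alpha * (p10 + p01) = 1 ->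
  optimal_attack N P0 alpha Pd Pf p10 p01.
Proof.
move=> /andP[a0 a1] hf hfd hd h10 h01 hs; split => //; split => //.
move=> q10 q01 _ _.
have an : alpha != 0.
  by apply/eqP => a; move: hs; rewrite a mul0r => /eqP; rewrite eq_sym oner_eq0.
have ep : p01 = alpha^-1 - p10.
  apply: (mulfI an); rewrite mulrBr divff // -hs; ring.
have e : pi11 alpha Pd p10 p01 = pi10 alpha Pf p10 p01.
  rewrite /pi11 /pi10 ep; by field.
have hp : 0 <= pi10 alpha Pf p10 p01 <= 1.
  move: h10 h01; rewrite /in01 /pi10 => /andP[? ?] /andP[? ?].
  apply/andP; split; nra.
rewrite !map_errorE e.
have [h1 h2] := @Err_le R N P0 (pi10 alpha Pf q10 q01) (pi11 alpha Pd q10 q01).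
by case: (@Err_eq R N P0 _ hp) => ->.
Qed.

Theorem theorem3 (R : realFieldType) (N : nat) (P0 alpha Pd Pf : R) :
  0 < P0 < 1 -> 0 <= alpha <= 1 -> 0 < Pf -> Pf < Pd -> Pd < 1 ->
  (alpha > 2^-1 ->
     forall p10 p01 : R, in01 p10 -> in01 p01 -> alpha * (p10 + p01) = 1 ->
       optimal_attack N P0 alpha Pd Pf p10 p01) /\
  (alpha <= 2^-1 -> optimal_attack N P0 alpha Pd Pf 1 1).
Proof.
move=> /andP[p0 p1] ha hf hfd hd; split.
  move=> _ p10 p01 h10 h01 hs; exact: blind_opt.
move=> hle.
have [->|hlt] := eqVneq alpha 2^-1.
  apply: blind_opt => //; rewrite /in01 ?ler01 ?lexx //.
  1-2: lra.
have hlt' : alpha < 2^-1 by rewrite lt_neqAle hlt hle.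
have h2 : 2 * alpha < 1.
  by rewrite mulrC -ltr_pdivlMr // ?ltr0n // mul1r.
move: ha => /andP[a0 a1].
split; first by rewrite /in01 ler01 lexx.
split; first by rewrite /in01 ler01 lexx.
move=> q10 q01 /andP[q10a q10b] /andP[q01a q01b].
pose c := 1 - alpha * (q10 + q01).
have c0 : 0 < c by rewrite /c; nra.
have cn : c != 0 by rewrite gt_eqF.
pose X := (1 - q10) * (1 - alpha) + alpha * (1 - q01).
have X0 : 0 <= X by rewrite /X; nra.
have HY : c - (alpha * X + (1 - 2 * alpha)) = alpha * ((1 - q01) * (1 - alpha) + alpha * (1 - q10)).
  rewrite /c /X; ring.
have HY0 : 0 <= alpha * ((1 - q01) * (1 - alpha) + alpha * (1 - q10)).
  apply: mulr_ge0 => //; apply: addr_ge0; apply: mulr_ge0; lra.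
pose m0 := alpha * X / c.
pose m1 := (alpha * X + (1 - 2 * alpha)) / c.
have hm0 : 0 <= m0 <= 1.
  apply/andP; split; first by rewrite /m0 divr_ge0 ?mulr_ge0 // ltW.
  rewrite /m0 ler_pdivrMr // mul1r; lra.
have hm1 : 0 <= m1 <= 1.
  apply/andP; split; first by apply: divr_ge0; [have := mulr_ge0 a0 X0; lra | exact: ltW].
  rewrite /m1 ler_pdivrMr // mul1r; lra.
have g0 : gg _ m0 m1 (pi10 alpha Pf q10 q01) = pi10 alpha Pf 1 1.
  rewrite /gg /m0 /m1 /pi10 /X; rewrite /c; field; exact: cn.
have g1 : gg _ m0 m1 (pi11 alpha Pd q10 q01) = pi11 alpha Pd 1 1.
  rewrite /gg /m0 /m1 /pi11 /X; rewrite /c; field; exact: cn.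
rewrite !map_errorE -g0 -g1.
exact: Err_garble.
Qed.
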